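(* Let $n\ge 4$ and let $G$ be a graph having the maximum value of $cM_2$ among all connected graphs of order $n$. Then $|M(G)|<\frac{5352}{10000}n$.
   Context: All graphs are finite and simple. For a graph $G$ and a vertex $u$, $d_u(G)$ denotes the degree of $u$ in $G$. The complementary second Zagreb index of $G$ is $cM_2(G)=\sum_{uv\in E(G)}\left|(d_u(G))^2-(d_v(G))^2\right|$. $M(G)$ denotes the set of vertices of $G$ having the maximum degree of $G$. *)

(* Defs.v *)
From mathcomp Require Import all_boot.
Set Implicit Arguments. Unset Strict Implicit. Unset Printing Implicit Defensive.

Definition simple_graph (n : nat) (g : rel 'I_n) : Prop :=
  symmetric g /\ irreflexive g.

Definition connected_graph (n : nat) (g : rel 'I_n) : Prop :=
  forall x y : 'I_n, connect g x y.

Definition deg (n : nat) (g : rel 'I_n) (u : 'I_n) : nat :=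
  #|[set v | g u v]|.

Definition absdiff (a b : nat) : nat := (a - b) + (b - a).

Definition cM2 (n : nat) (g : rel 'I_n) : nat :=
  \sum_(u : 'I_n) \sum_(v : 'I_n | (u < v) && g u v)
      absdiff (deg g u ^ 2) (deg g v ^ 2).

Definition maxdeg (n : nat) (g : rel 'I_n) : nat :=
  \max_(u : 'I_n) deg g u.

Definition maxdeg_set (n : nat) (g : rel 'I_n) : {set 'I_n} :=
  [set u | deg g u == maxdeg g].

(* Main.v *)
From Stdlib Require Import ZArith Lia.
Require Import Defs.
From mathcomp Require Import all_boot.
From mathcomp Require Import zify.

Lemma keyZ (d k : Z) : (0 <= d)%Z -> (0 <= k)%Z -> (5*d*k*(2*d+k) <= 2*(d+k)*(d+k)*(d+k))%Z.
Proof. move=> h1 h2.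
case: (Z.le_gt_cases d (2*k)) => hd.
- have := Z.mul_nonneg_nonneg _ _ (Z.mul_nonneg_nonneg _ _ h1 (Z.square_nonneg (d-k))) (Zle_minus_le_0 _ _ hd).
  have := Z.mul_nonneg_nonneg _ _ (Z.square_nonneg k) (Zle_minus_le_0 _ _ hd).
  nia.
- nia.
Qed.
Lemma key d D : d <= D -> 5*d*(D^2-d^2) <= 2*D^3.
Proof. move=> h. rewrite subn_sqr. have [k ->] : exists k, D = d + k by exists (D-d); lia.
rewrite addKn !expnS !expn0.
have := keyZ (Z.of_nat d) (Z.of_nat k). lia.
Qed.
Lemma numex n : 4 <= n -> exists a, 0 < a < n /\
  4648*n*(n.-1)^3 < 25*1000*a*(n-a)*((n.-1)^2-a^2).
Proof.
move=> hn.
have [q [r [hr e]]] : exists q r, r < 5 /\ n = 5*q + r by exists (n %/ 5), (n %% 5); lia.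
subst n.
case: r hr hn => [|[|[|[|[|r]]]]] // _ hn.
- have [p ->] : exists p, q = p.+1 by exists q.-1; lia.
  exists (2*p+2). rewrite !subn_sqr.
  have -> : (5 * p.+1 + 0).-1 = 5*p+4 by lia.
  have -> : 5 * p.+1 + 0 - (2*p+2) = 3*p+3 by lia.
  have -> : 5*p+4 - (2*p+2) = 3*p+2 by lia.
  split; first lia. rewrite !expnS !expn0. nia.
- have [p ->] : exists p, q = p.+1 by exists q.-1; lia.
  exists (2*p+2). rewrite !subn_sqr.
  have -> : (5 * p.+1 + 1).-1 = 5*p+5 by lia.
  have -> : 5 * p.+1 + 1 - (2*p+2) = 3*p+4 by lia.
  have -> : 5*p+5 - (2*p+2) = 3*p+3 by lia.
  split; first lia. rewrite !expnS !expn0. nia.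
- have [p ->] : exists p, q = p.+1 by exists q.-1; lia.
  exists (2*p+2). rewrite !subn_sqr.
  have -> : (5 * p.+1 + 2).-1 = 5*p+6 by lia.
  have -> : 5 * p.+1 + 2 - (2*p+2) = 3*p+5 by lia.
  have -> : 5*p+6 - (2*p+2) = 3*p+4 by lia.
  split; first lia. rewrite !expnS !expn0. nia.
- have [p ->] : exists p, q = p.+1 by exists q.-1; lia.
  exists (2*p+3). rewrite !subn_sqr.
  have -> : (5 * p.+1 + 3).-1 = 5*p+7 by lia.
  have -> : 5 * p.+1 + 3 - (2*p+3) = 3*p+5 by lia.
  have -> : 5*p+7 - (2*p+3) = 3*p+4 by lia.
  split; first lia. rewrite !expnS !expn0. nia.
- exists (2*q+1). rewrite !subn_sqr.
  have -> : (5 * q + 4).-1 = 5*q+3 by lia.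
  have -> : 5 * q + 4 - (2*q+1) = 3*q+3 by lia.
  have -> : 5*q+3 - (2*q+1) = 3*q+2 by lia.
  split; first lia. rewrite !expnS !expn0. nia.
Qed.

Set Implicit Arguments. Unset Strict Implicit. Unset Printing Implicit Defensive.

Lemma card_lt n a : a <= n -> #|[set v : 'I_n | v < a]| = a.
Proof.
move=> han. rewrite -sum1_card.
rewrite (eq_bigl (fun v : 'I_n => v < a)); last by move=> v; rewrite inE.
by rewrite -(@big_ord_widen _ 0 addn a n (fun _ => 1) han) sum1_card card_ord.
Qed.

Lemma deg_le n (g : rel 'I_n) u : irreflexive g -> deg g u <= n.-1.
Proof.
move=> irr. rewrite /deg. have <- : #|[set~ u]| = n.-1 by rewrite cardsC1 card_ord.
apply: subset_leq_card.
apply/subsetP => v; rewrite !inE => guv. apply/eqP => e; subst v. by rewrite irr in guv.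
Qed.

Lemma sub_sum (T : finType) (Q P : pred T) (G F : T -> nat) :
  (forall v, Q v -> P v && (G v <= F v)) -> \sum_(v | Q v) G v <= \sum_(v | P v) F v.
Proof.
move=> h. rewrite big_mkcond [X in _ <= X]big_mkcond. apply: leq_sum => v _.
case: (boolP (Q v)) => // /h /andP [-> //].
Qed.

Definition split_g n (a : nat) : rel 'I_n := fun u v => (u != v) && ((u < a) || (v < a)).
Arguments split_g : clear implicits.

Lemma split_simple n a : simple_graph (split_g n a).
Proof. split. by move=> u v; rewrite /split_g eq_sym orbC. by move=> u; rewrite /split_g eqxx. Qed.

Lemma split_conn n a : 0 < a -> a <= n -> connected_graph (split_g n a).
Proof.
move=> ha han x y. have z0 : 0 < n by lia.
set z := Ordinal z0.
have hz : forall w, connect (split_g n a) w z.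
  move=> w. case: (eqVneq w z) => [->|ne]; first exact: connect0.
  apply: connect1. by rewrite /split_g ne /= orbC /= ha.
apply: connect_trans (hz x) _.
case: (eqVneq y z) => [->|ne]; first exact: connect0.
apply: connect1. by rewrite /split_g eq_sym ne /= ha.
Qed.

Lemma split_deg_lo n a (u : 'I_n) : u < a -> deg (split_g n a) u = n.-1.
Proof.
move=> hu. rewrite /deg. have <- : #|[set~ u]| = n.-1 by rewrite cardsC1 card_ord.
apply: eq_card => v.
rewrite !inE /split_g hu /=. by rewrite andbT eq_sym.
Qed.

Lemma split_deg_hi n a (u : 'I_n) : a <= n -> a <= u -> deg (split_g n a) u = a.
Proof.
move=> han hu. rewrite /deg. transitivity #|[set v : 'I_n | v < a]|; last exact: card_lt han. apply: eq_card => v.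
rewrite !inE /split_g. have -> : (u < a) = false by lia.
case: (ltnP v a) => hv; last by rewrite andbF.
rewrite andbT. apply/eqP => e. subst v. lia.
Qed.

Lemma split_cM2 n a : 0 < a -> a <= n ->
  a * ((n - a) * ((n.-1)^2 - a^2)) <= cM2 (split_g n a).
Proof.
move=> ha han. rewrite /cM2.
set C := (n.-1)^2 - a^2.
have e1 : a * ((n - a) * C) = \sum_(u : 'I_n | u < a) \sum_(v : 'I_n | a <= v) C.
  rewrite (eq_bigr (fun _ => (n-a) * C)); last first.
    move=> u _. rewrite sum_nat_const. congr (_ * _).
    have := cardC [pred v : 'I_n | v < a]. rewrite card_ord.
    have -> : #|[pred v : 'I_n | v < a]| = a.
      by rewrite -[RHS](card_lt han); apply: eq_card => v; rewrite inE.
    move=> h. have <- : #|[predC [pred v : 'I_n | v < a]]| = #|[pred v : 'I_n | a <= v]|.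
      by apply: eq_card => v; rewrite !inE -leqNgt.
    by apply/eqP; rewrite -(eqn_add2l a) subnKC // h.
  rewrite sum_nat_const. congr (_ * _). symmetry. transitivity #|[set v : 'I_n | v < a]|; last exact: card_lt han.
  by apply: eq_card => v; rewrite inE.
rewrite e1. apply: leq_trans (sub_sum (P := xpredT) (F := fun u : 'I_n => \sum_(v : 'I_n | (u < v) && split_g n a u v)
      absdiff (deg (split_g n a) u ^ 2) (deg (split_g n a) v ^ 2)) _) _ => //.
move=> u hu /=. apply: sub_sum => v hv.
rewrite (split_deg_lo hu) (split_deg_hi han hv).
have -> : (u < v) && split_g n a u v.
  apply/andP; split; first lia. rewrite /split_g hu /= andbT. apply/eqP => e; subst v; lia.
rewrite /absdiff /C. lia.
Qed.
Lemma cM2_upper n (g : rel 'I_n) : simple_graph g ->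
  5 * cM2 g <= #|~: maxdeg_set g| * (2 * (n.-1)^3).
Proof.
move=> [sym irr].
set D := maxdeg g.
have hD : forall u, deg g u <= D by move=> u; exact: leq_bigmax.
have DN : D <= n.-1 by apply/bigmax_leqP => u _; exact: deg_le.
set f := fun u => D^2 - deg g u ^ 2.
have s1 : cM2 g <= \sum_(u : 'I_n) \sum_(v : 'I_n | (u < v) && g u v) (f u + f v).
  apply: leq_sum => u _; apply: leq_sum => v _.
  have := hD u; have := hD v. rewrite /f /absdiff.
  move=> h1 h2.
  have h1' : deg g v ^ 2 <= D ^ 2 by rewrite leq_exp2r.
  have h2' : deg g u ^ 2 <= D ^ 2 by rewrite leq_exp2r.
  lia.
have s2 : \sum_(u : 'I_n) \sum_(v : 'I_n | (u < v) && g u v) (f u + f v)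
     <= \sum_(u : 'I_n) deg g u * f u.
  under eq_bigr do rewrite big_split /=.
  rewrite big_split /=.
  rewrite [X in _ + X <= _](exchange_big_dep xpredT) //=.
  rewrite -big_split /=. apply: leq_sum => u _.
  rewrite /deg -sum_nat_const.
  rewrite big_mkcond [X in _ + X <= _]big_mkcond [X in _ <= X]big_mkcond -big_split /=.
  apply: leq_sum => v _. rewrite inE (sym v u).
  case: (g u v); last by rewrite !andbF.
  rewrite !andbT. by case: (ltngtP u v) => _; rewrite ?addn0 ?add0n.
have s3 : 5 * \sum_(u : 'I_n) deg g u * f u <= #|~: maxdeg_set g| * (2 * (n.-1)^3).
  rewrite big_distrr /= -sum_nat_const.
  rewrite big_mkcond [X in _ <= X]big_mkcond. apply: leq_sum => u _.
  rewrite in_setC /maxdeg_set inE -/D.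
  case: eqP => [e|ne] /=; first by rewrite /f e subnn !muln0.
  rewrite mulnA. apply: leq_trans (@key _ _ (hD u)) _.
  rewrite leq_mul2l /= leq_exp2r //.
apply: leq_trans s3. rewrite leq_mul2l /=. exact: leq_trans s1 s2.
Qed.

Theorem corollary1 (n : nat) (g : rel 'I_n) :
  4 <= n ->
  simple_graph g -> connected_graph g ->
  (forall h : rel 'I_n, simple_graph h -> connected_graph h -> cM2 h <= cM2 g) ->
  #|maxdeg_set g| * 10000 < 5352 * n.
Proof.
move=> hn sg cg hmax.
have [a [/andP [ha1 ha2] hnum]] := @numex n hn.
have han : a <= n by lia.
have h1 := split_cM2 ha1 han.
have h2 := hmax _ (split_simple n a) (split_conn ha1 han).
have h3 := cM2_upper sg.
have hc : #|~: maxdeg_set g| = n - #|maxdeg_set g| by rewrite cardsCs setCK card_ord.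
rewrite hc in h3.
have e1 : 10000 = 100 * 100 by [].
have e2 : 5352 = 4 * 1338 by [].
rewrite e1 e2. rewrite ltnNge. apply/negP => hk.
have hm : (n - #|maxdeg_set g|) * (100*100) <= 4648 * n.
  have := max_card (maxdeg_set g). rewrite card_ord. lia.
have hnum' : 4648 * n * n.-1 ^ 3 < 25 * 1000 * (a * ((n - a) * ((n.-1)^2 - a^2))).
  by move: hnum; rewrite !mulnA.
move: hnum' h1 h2 h3 hm.
generalize (a * ((n - a) * ((n.-1)^2 - a^2))) => X.
generalize (n.-1 ^ 3) => Y. generalize (n - #|maxdeg_set g|) => m.
generalize (cM2 (split_g n a)) (cM2 g) => c1 c2.
move=> *. nia.
Qed.
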